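(* Let $q_1(x),q_2(x)\in\mathbb{R}[x]$ be two monic quadratic polynomials neither of which is the square of a linear polynomial, and let $I\subseteq\mathbb{R}$ be the largest (infinite) interval on which both $q_1$ and $q_2$ are non-negative. Let $P_1,P_2,P_3,P_4\in\mathbb{R}[x]$ with $C:=\max\{\deg P_j:1\le j\le4\}\ge0$, and put $$P(x)=P_1(x)+P_2(x)\sqrt{q_1(x)}+P_3(x)\sqrt{q_2(x)}+P_4(x)\sqrt{q_1(x)q_2(x)}.$$ Then the equation $P(x)=0$ has at most $4(C+2)$ roots in $I$, unless $q_1=q_2$ and both $P_2+P_3$ and $P_1+q_1P_4$ are the zero polynomial, in which case $P(x)=0$ for every $x\in I$.
   Context: The zero polynomial is assigned degree $-1$. *)

(* Defs.v *)
From HB Require Import structures.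
From mathcomp Require Import all_boot all_order all_algebra.
From mathcomp Require Import reals.
Set Implicit Arguments. Unset Strict Implicit. Unset Printing Implicit Defensive.
Import Order.TTheory GRing.Theory Num.Theory.
Local Open Scope ring_scope.

Definition square_of_linear (R : realType) (q : {poly R}) : Prop :=
  exists l : {poly R}, size l = 2%N /\ q = l ^+ 2.

Definition unbounded_itv (R : realType) (I : interval R) : Prop :=
  (forall M : R, exists2 x, x \in I & M < x) \/
  (forall M : R, exists2 x, x \in I & x < M).

Definition both_nonneg_on (R : realType) (q1 q2 : {poly R}) (I : interval R) : Prop :=
  forall x, x \in I -> 0 <= q1.[x] /\ 0 <= q2.[x].

Definition largest_nonneg_itv (R : realType) (q1 q2 : {poly R}) (I : interval R) : Prop :=
  [/\ unbounded_itv I, both_nonneg_on q1 q2 I &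
      forall J : interval R, unbounded_itv J -> both_nonneg_on q1 q2 J ->
        {subset I <= J} -> {subset J <= I}].

Definition Pfun (R : realType) (q1 q2 P1 P2 P3 P4 : {poly R}) (x : R) : R :=
  P1.[x] + P2.[x] * Num.sqrt q1.[x] + P3.[x] * Num.sqrt q2.[x]
  + P4.[x] * Num.sqrt (q1.[x] * q2.[x]).

(* degree with the convention deg 0 = -1 ; here as an int *)
Definition pdeg (R : realType) (p : {poly R}) : int := (size p)%:Z - 1.

Definition Cmax (R : realType) (P1 P2 P3 P4 : {poly R}) : int :=
  Num.max (Num.max (pdeg P1) (pdeg P2)) (Num.max (pdeg P3) (pdeg P4)).

Definition at_most_roots_in (R : realType) (f : R -> R) (I : interval R) (N : int) : Prop :=
  forall s : seq R, uniq s -> (forall x, x \in s -> x \in I /\ f x = 0) ->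
    (size s)%:Z <= N.

(* Main.v *)
Require Import Defs.
From HB Require Import structures.
From mathcomp Require Import all_boot all_order all_algebra.
From mathcomp Require Import reals.
From mathcomp Require Import complex.
From mathcomp Require Import ring lra zify.
Set Implicit Arguments. Unset Strict Implicit. Unset Printing Implicit Defensive.
Import Order.TTheory GRing.Theory Num.Theory.
Local Open Scope ring_scope.

Section Closed.
Variable F : closedFieldType.

Lemma split2 (q : {poly F}) : q \is monic -> size q = 3%N ->
  exists a b, q = ('X - a%:P) * ('X - b%:P).
Proof.
move=> mq sq; have [r Er] := closed_field_poly_normal q.
move: (Er); rewrite (monicP mq) scale1r => Eq.
have: size r = 2%N.
  by move: sq; rewrite Eq size_prod_XsubC => -[].
case: r Er Eq => [|a [|b [|]]] //= _ Eq _.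
by exists a, b; rewrite Eq !big_cons big_nil mulr1.
Qed.

Lemma mup_q (a b c : F) : mup c (('X - a%:P) * ('X - b%:P)) = ((a == c) + (b == c))%N.
Proof.
rewrite mupM ?polyXsubC_eq0 //.
by have := @mup_XsubCX F 1 c a; have := @mup_XsubCX F 1 c b; rewrite !expr1 => -> ->; case: eqP; case: eqP.
Qed.

Lemma mup_sq (c : F) (U : {poly F}) : U != 0 -> mup c (U * U) = (mup c U).*2.
Proof. by move=> nU; rewrite mupM // addnn. Qed.

Lemma KLc (a b : F) (U V : {poly F}) : a != b ->
  U * U = ('X - a%:P) * ('X - b%:P) * (V * V) -> V = 0.
Proof.
move=> nab E; apply/eqP/negPn/negP => nV.
have nq : ('X - a%:P) * ('X - b%:P) != 0 by rewrite mulf_neq0 ?polyXsubC_eq0.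
have nU : U != 0.
  by apply/negP => /eqP U0; move: E; rewrite U0 mul0r => /esym/eqP; rewrite !mulf_eq0 (negPf nV) /= orbF; rewrite -mulf_eq0 (negPf nq).
have := congr1 (mup a) E.
rewrite mup_sq // mupM //; last by rewrite mulf_neq0.
  rewrite mup_q mup_sq // eqxx [b == a]eq_sym (negPf nab) => H.
by have := congr1 odd H; rewrite oddD !odd_double.
Qed.

Lemma KLc' (a b c d : F) (B N : {poly F}) : a != b -> c != d -> N != 0 ->
  ('X - a%:P) * ('X - b%:P) * (B * B) = ('X - c%:P) * ('X - d%:P) * (N * N) ->
  ('X - a%:P) * ('X - b%:P) = ('X - c%:P) * ('X - d%:P).
Proof.
move=> nab ncd nN E.
have nq2 : ('X - c%:P) * ('X - d%:P) != 0 by rewrite mulf_neq0 ?polyXsubC_eq0.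
have nq1 : ('X - a%:P) * ('X - b%:P) != 0 by rewrite mulf_neq0 ?polyXsubC_eq0.
have nB : B != 0.
  apply/negP => /eqP B0; move: E; rewrite B0 mul0r mulr0 => /esym/eqP.
  by rewrite mulf_eq0 (negPf nq2) mulf_eq0 (negPf nN).
have key : forall x, (a == x) (+) (b == x) = (c == x) (+) (d == x).
  move=> x; have := congr1 (mup x) E.
  rewrite mupM //; last by rewrite mulf_neq0.
  rewrite [RHS]mupM //; last by rewrite mulf_neq0.
  rewrite !mup_sq // !mup_q => H.
  have := congr1 odd H; rewrite !oddD !odd_double.
  by case: (a == x); case: (b == x); case: (c == x); case: (d == x).
have ha := key a; have hb := key b; rewrite !eqxx in ha hb.
rewrite (negPf nab) /= in hb; rewrite (eq_sym b a) (negPf nab) /= in ha.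
case: (eqVneq c a) ha hb => [->|nca] /=.
  by rewrite (negPf nab) /= => _ /esym/eqP <-.
move=> /esym/eqP ->; rewrite (negPf nab) addbF.
by case: eqP => //= -> _; rewrite mulrC.
Qed.
End Closed.

Section Real.
Variable R : realType.
Definition toC (p : {poly R}) : {poly R[i]} := map_poly (real_complex R) p.

Lemma nonsq (q : {poly R}) : q \is monic -> size q = 3%N ->
  ~ (exists l : {poly R}, size l = 2%N /\ q = l ^+ 2) ->
  exists a b : R[i], a != b /\ toC q = ('X - a%:P) * ('X - b%:P).
Proof.
move=> mq sq nsq.
have mC : toC q \is monic by rewrite /toC map_monic.
have sC : size (toC q) = 3%N by rewrite /toC size_map_poly.
have := split2 mC sC; case=> a; case=> b E.
exists a, b; split => //; apply/negP => /eqP ab; subst b.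
have := congr1 (fun p : {poly R[i]} => p`_1) E; rewrite /toC coef_map /=.
rewrite mulrBr !mulrBl coefD coefN coefD coefN.
rewrite -polyCM -expr2 coefB coefXn !coefCM coefX coefC /= coefMC coefX /= => h.
have ha : a = - (q`_1)%:C%C / 2.
  by rewrite h; field.
apply: nsq; exists ('X - (- q`_1 / 2)%:P); split; first by rewrite size_XsubC.
apply: (@map_poly_inj _ _ (real_complex R)).
rewrite -/(toC q) E ha rmorphXn /= map_polyXsubC expr2.
congr (('X - _%:P) * ('X - _%:P)); by rewrite fmorph_div rmorphN rmorph_nat.
Qed.

Lemma toCM (p r : {poly R}) : toC (p * r) = toC p * toC r.
Proof. by rewrite /toC rmorphM. Qed.

Lemma KL (q U V : {poly R}) : q \is monic -> size q = 3%N ->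
  ~ (exists l : {poly R}, size l = 2%N /\ q = l ^+ 2) ->
  U * U = q * (V * V) -> V = 0.
Proof.
move=> mq sq nsq E.
have := nonsq mq sq nsq; case=> a; case=> b [nab Eq].
have := congr1 toC E; rewrite !toCM Eq => /(KLc nab) /eqP.
by rewrite /toC map_poly_eq0 => /eqP.
Qed.

Lemma KL' (q1 q2 B N : {poly R}) : q1 \is monic -> size q1 = 3%N ->
  ~ (exists l : {poly R}, size l = 2%N /\ q1 = l ^+ 2) ->
  q2 \is monic -> size q2 = 3%N ->
  ~ (exists l : {poly R}, size l = 2%N /\ q2 = l ^+ 2) -> N != 0 ->
  q1 * (B * B) = q2 * (N * N) -> q1 = q2.
Proof.
move=> mq1 sq1 nsq1 mq2 sq2 nsq2 nN E.
have := nonsq mq1 sq1 nsq1; case=> a; case=> b [nab Eq1].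
have := nonsq mq2 sq2 nsq2; case=> c; case=> d [ncd Eq2].
have nNC : toC N != 0 by rewrite /toC map_poly_eq0.
have := congr1 toC E; rewrite !toCM Eq1 Eq2 => /(KLc' nab ncd nNC).
rewrite -Eq1 -Eq2; exact: map_poly_inj.
Qed.
End Real.

Section Main.
Variable R : realType.
Implicit Types p r : {poly R}.

Definition sz p (n : nat) := (size p <= n.+1)%N.

Lemma szD p r n : sz p n -> sz r n -> sz (p + r) n.
Proof. rewrite /sz => hp hr; apply: leq_trans (size_polyD _ _) _; by rewrite geq_max hp hr. Qed.

Lemma szB p r n : sz p n -> sz r n -> sz (p - r) n.
Proof. by move=> hp hr; apply: szD => //; rewrite /sz size_polyN. Qed.

Lemma szM p r a b n : sz p a -> sz r b -> (a + b <= n)%N -> sz (p * r) n.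
Proof.
rewrite /sz => hp hr hn; apply: leq_trans (size_polyMleq _ _) _.
have := leq_add hp hr; lia.
Qed.

Lemma szW p a n : sz p a -> (a <= n)%N -> sz p n.
Proof. rewrite /sz; lia. Qed.

Definition Upol q1 q2 P1 P2 P3 P4 : {poly R} :=
  P1 * P1 + q1 * (P2 * P2) - q2 * (P3 * P3) - q1 * q2 * (P4 * P4).
Definition Vpol q2 P1 P2 P3 P4 : {poly R} := P1 * P2 - q2 * (P3 * P4).
Definition Qpol q1 q2 P1 P2 P3 P4 : {poly R} :=
  Upol q1 q2 P1 P2 P3 P4 * Upol q1 q2 P1 P2 P3 P4 -
  q1 * ((Vpol q2 P1 P2 P3 P4 + Vpol q2 P1 P2 P3 P4) * (Vpol q2 P1 P2 P3 P4 + Vpol q2 P1 P2 P3 P4)).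
Definition Tpol q P1 P2 P3 P4 : {poly R} :=
  (P1 + q * P4) * (P1 + q * P4) - q * ((P2 + P3) * (P2 + P3)).

Lemma ptQ (a b c e s1 s2 q1v q2v : R) : q1v = s1 ^+ 2 -> q2v = s2 ^+ 2 ->
  a + b * s1 + c * s2 + e * (s1 * s2) = 0 ->
  (a * a + q1v * (b * b) - q2v * (c * c) - q1v * q2v * (e * e)) *
  (a * a + q1v * (b * b) - q2v * (c * c) - q1v * q2v * (e * e)) -
  q1v * ((a * b - q2v * (c * e) + (a * b - q2v * (c * e))) *
         (a * b - q2v * (c * e) + (a * b - q2v * (c * e)))) = 0.
Proof.
move=> -> -> h.
transitivity ((a + b * s1 + c * s2 + e * (s1 * s2)) *
  ((a - b * s1 + c * s2 - e * (s1 * s2)) * (a + b * s1 - c * s2 - e * (s1 * s2)) *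
   (a - b * s1 - c * s2 + e * (s1 * s2)))); first by ring.
by rewrite h mul0r.
Qed.

Lemma ptT (a b c e s qv : R) : qv = s ^+ 2 ->
  a + b * s + c * s + e * (s * s) = 0 ->
  (a + qv * e) * (a + qv * e) - qv * ((b + c) * (b + c)) = 0.
Proof.
move=> -> h.
transitivity ((a + b * s + c * s + e * (s * s)) * (a + s ^+ 2 * e - (b + c) * s)); first by ring.
by rewrite h mul0r.
Qed.

End Main.

Unset Implicit Arguments.

Theorem theorem5p1 (R : realType) (q1 q2 P1 P2 P3 P4 : {poly R}) (I : interval R) :
  q1 \is monic -> size q1 = 3%N -> ~ square_of_linear q1 ->
  q2 \is monic -> size q2 = 3%N -> ~ square_of_linear q2 ->
  largest_nonneg_itv q1 q2 I ->
  0 <= Cmax P1 P2 P3 P4 ->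
  (~ (q1 = q2 /\ P2 + P3 = 0 /\ P1 + q1 * P4 = 0) ->
     at_most_roots_in (Pfun q1 q2 P1 P2 P3 P4) I (4 * (Cmax P1 P2 P3 P4 + 2))) /\
  ((q1 = q2 /\ P2 + P3 = 0 /\ P1 + q1 * P4 = 0) ->
     forall x, x \in I -> Pfun q1 q2 P1 P2 P3 P4 x = 0).
Proof.
move=> mq1 sq1 nsq1 mq2 sq2 nsq2 [_ Hnn _] C0; split; last first.
  move=> [e12 [e23 e14]] x xI; subst q2.
  have [h1 _] := Hnn x xI.
  have e3 : P3.[x] = - P2.[x].
    move: (congr1 (fun p => p.[x]) e23); rewrite hornerD horner0 => /eqP; rewrite addrC addr_eq0 => /eqP //.
  have e1 : P1.[x] = - (q1.[x] * P4.[x]).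
    move: (congr1 (fun p => p.[x]) e14); rewrite hornerD hornerM horner0 => /eqP; rewrite addr_eq0 => /eqP //.
  rewrite /Pfun (@sqrtrM _ q1.[x] q1.[x] h1) -expr2 sqr_sqrtr // e3 e1; ring.
move=> nexc s us Hs.
set C := Cmax P1 P2 P3 P4 in C0 *.
have hc1 : pdeg P1 <= C by rewrite /C /Cmax !le_max lexx ?orbT.
have hc2 : pdeg P2 <= C by rewrite /C /Cmax !le_max lexx ?orbT.
have hc3 : pdeg P3 <= C by rewrite /C /Cmax !le_max lexx ?orbT.
have hc4 : pdeg P4 <= C by rewrite /C /Cmax !le_max lexx ?orbT.
have allz : P1 = 0 -> P2 = 0 -> P3 = 0 -> P4 = 0 -> False.
  move=> z1 z2 z3 z4; move: C0; rewrite /C /Cmax z1 z2 z3 z4 /pdeg size_poly0.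
  by rewrite !maxxx.
case Ck: C C0 hc1 hc2 hc3 hc4 => [k|k] // _ hc1 hc2 hc3 hc4.
have h1 : sz P1 k by rewrite /sz; move: hc1; rewrite /pdeg; lia.
have h2 : sz P2 k by rewrite /sz; move: hc2; rewrite /pdeg; lia.
have h3 : sz P3 k by rewrite /sz; move: hc3; rewrite /pdeg; lia.
have h4 : sz P4 k by rewrite /sz; move: hc4; rewrite /pdeg; lia.
have hq1 : sz q1 2 by rewrite /sz sq1.
have hq2 : sz q2 2 by rewrite /sz sq2.
suff [Q [nQ sQ rQ]] : exists Q : {poly R}, [/\ Q != 0, sz Q (4 * k + 8)%N &
    forall x, x \in I -> Pfun q1 q2 P1 P2 P3 P4 x = 0 -> root Q x].
  have allr : all (root Q) s by apply/allP => x /Hs [xI px]; exact: rQ x xI px.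
  have := max_poly_roots nQ allr us; move: sQ; rewrite /sz; idtac.
move=> a b; rewrite -[4]/(Posz 4%N) -[2]/(Posz 2%N) -PoszD -PoszM lez_nat; rewrite -ltnS; apply: (leq_trans b); apply: (leq_trans a); lia.
case: (eqVneq q1 q2) => [e12 | n12].
  subst q2; exists (Tpol q1 P1 P2 P3 P4); split.
  - apply/eqP => T0; apply: nexc.
    have E : (P1 + q1 * P4) * (P1 + q1 * P4) = q1 * ((P2 + P3) * (P2 + P3)).
      by apply/eqP; rewrite -subr_eq0; apply/eqP.
    have e23 := KL mq1 sq1 nsq1 E.
    rewrite e23 mul0r mulr0 in E; move/eqP: E; rewrite mulf_eq0 orbb => /eqP e14.
    by [].
  - rewrite /Tpol; apply: szB.
      apply: (szM (a := (k + 2)%N) (b := (k + 2)%N)); last by lia.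
        by apply: szD; [apply: szW h1 _; lia | apply: (szM hq1 h4); lia].
      by apply: szD; [apply: szW h1 _; lia | apply: (szM hq1 h4); lia].
    apply: (szM hq1 (b := (2 * k)%N)); last by lia.
    by apply: szM (szD h2 h3) (szD h2 h3) _; lia.
  - move=> x xI px; have [h1x _] := Hnn x xI.
    rewrite /Pfun (@sqrtrM _ q1.[x] q1.[x] h1x) in px.
    rewrite /root /Tpol !(hornerD, hornerN, hornerM); apply/eqP.
    exact: (ptT (esym (sqr_sqrtr h1x)) px).
exists (Qpol q1 q2 P1 P2 P3 P4); split.
- apply/eqP => Q0.
  have EU : Upol q1 q2 P1 P2 P3 P4 * Upol q1 q2 P1 P2 P3 P4 =
      q1 * ((Vpol q2 P1 P2 P3 P4 + Vpol q2 P1 P2 P3 P4) * (Vpol q2 P1 P2 P3 P4 + Vpol q2 P1 P2 P3 P4)).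
    by apply/eqP; rewrite -subr_eq0; apply/eqP.
  have VV := KL mq1 sq1 nsq1 EU.
  have V0 : Vpol q2 P1 P2 P3 P4 = 0.
    have h2i : (2^-1 + 2^-1 : R) = 1 by field.
    have : (2^-1 : R) *: (Vpol q2 P1 P2 P3 P4 + Vpol q2 P1 P2 P3 P4) = Vpol q2 P1 P2 P3 P4.
      by rewrite scalerDr -scalerDl h2i scale1r.
    by rewrite VV scaler0.
  rewrite VV mul0r mulr0 in EU; move/eqP: EU; rewrite mulf_eq0 orbb => /eqP U0.
  set n := P3 * P3 - q1 * (P4 * P4).
  have [n0|nn] := eqVneq n 0.
    have E34 : P3 * P3 = q1 * (P4 * P4) by apply/eqP; rewrite -subr_eq0; apply/eqP.
    have z4 := KL mq1 sq1 nsq1 E34.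
    rewrite z4 !(mul0r, mulr0) in E34; move/eqP: E34; rewrite mulf_eq0 orbb => /eqP z3.
    move: U0 V0; rewrite /Upol /Vpol z3 z4 !(mul0r, mulr0, subr0) => U0 V0.
    have nq1 : q1 != 0 by rewrite monic_neq0.
    move/eqP: V0; rewrite mulf_eq0 => /orP [] /eqP z.
      move: U0; rewrite z !(mul0r, add0r) => /eqP; rewrite mulf_eq0 (negPf nq1) mulf_eq0 orbb => /eqP z2.
      exact: allz.
    move: U0; rewrite z !(mul0r, mulr0, addr0) => /eqP; rewrite mulf_eq0 orbb => /eqP z1.
    exact: allz.
  set al := P1 * P3 - q1 * (P2 * P4).
  set be := P2 * P3 - P1 * P4.
  have Eab : al * be = Vpol q2 P1 P2 P3 P4 * (P3 * P3 + q1 * (P4 * P4)) - P3 * P4 * Upol q1 q2 P1 P2 P3 P4.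
    by rewrite /al /be /Vpol /Upol; ring.
  have Eaa : al * al + q1 * (be * be) - q2 * (n * n) =
     Upol q1 q2 P1 P2 P3 P4 * (P3 * P3 + q1 * (P4 * P4)) - 4%:R * q1 * P3 * P4 * Vpol q2 P1 P2 P3 P4.
    by rewrite /al /be /n /Vpol /Upol; ring.
  rewrite U0 V0 !(mul0r, mulr0, subrr) in Eab Eaa.
  move/eqP: Eab; rewrite mulf_eq0 => /orP [] /eqP z.
    rewrite z !(mul0r, add0r) in Eaa.
    have E : q1 * (be * be) = q2 * (n * n) by apply/eqP; rewrite -subr_eq0; apply/eqP.
    by move: n12; rewrite (KL' mq1 sq1 nsq1 mq2 sq2 nsq2 nn E) eqxx.
  rewrite z !(mul0r, mulr0, addr0) in Eaa.
  have E : al * al = q2 * (n * n) by apply/eqP; rewrite -subr_eq0; apply/eqP.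
  by move: nn; rewrite (KL mq2 sq2 nsq2 E) eqxx.
- have sV : sz (Vpol q2 P1 P2 P3 P4 + Vpol q2 P1 P2 P3 P4) (2 * k + 2)%N.
    rewrite /Vpol; apply: szD; apply: szB.
    - by apply: (szM h1 h2); clear; lia.
    - by apply: (szM hq2 (szM (n := (2 * k)%N) h3 h4 _)); clear; lia.
    - by apply: (szM h1 h2); clear; lia.
    - by apply: (szM hq2 (szM (n := (2 * k)%N) h3 h4 _)); clear; lia.
  have t1 : sz (P1 * P1) (2 * k + 4)%N by apply: (szM h1 h1); clear; lia.
  have t2 : sz (q1 * (P2 * P2)) (2 * k + 4)%N.
    by apply: (szM hq1 (szM (n := (2 * k)%N) h2 h2 _)); clear; lia.
  have t3 : sz (q2 * (P3 * P3)) (2 * k + 4)%N.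
    by apply: (szM hq2 (szM (n := (2 * k)%N) h3 h3 _)); clear; lia.
  have t4 : sz (q1 * q2 * (P4 * P4)) (2 * k + 4)%N.
    by apply: (szM (szM (n := 4%N) hq1 hq2 _) (szM (n := (2 * k)%N) h4 h4 _)); clear; lia.
  have sU : sz (Upol q1 q2 P1 P2 P3 P4) (2 * k + 4)%N.
    by rewrite /Upol; apply: szB t4; apply: szB t3; apply: szD.
  rewrite /Qpol; apply: szB.
    by apply: (szM sU sU); clear; lia.
  by apply: (szM hq1 (szM sV sV (n := (4 * k + 4)%N) _)); clear; lia.
- move=> x xI px; have [h1x h2x] := Hnn x xI.
  rewrite /Pfun (@sqrtrM _ q1.[x] q2.[x] h1x) in px.
  rewrite /root /Qpol /Upol /Vpol !(hornerD, hornerN, hornerM); apply/eqP.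
  exact: (ptQ (esym (sqr_sqrtr h1x)) (esym (sqr_sqrtr h2x)) px).
Qed.
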